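(* For $B=\{x,y\}$ the equivalence relation $\equiv_{\textsc{MaxCut},B}$ restricted to $B$-boundaried graphs $G_B$ with $G-B$ edgeless has infinitely many equivalence classes; consequently, the parameterized problem \textsc{Maximum Cut}[vc] does not admit a boundaried kernelization (of any computable size $f$).
   Context: A boundaried graph $G_B$ is a finite simple graph $G$ together with a set $B\subseteq V(G)$ (the boundary). For boundaried graphs $G_B$ and $H_C$ with $V(G)\cap V(H)\subseteq B\cap C$, the gluing $G_B\oplus H_C$ is the simple graph obtained from the disjoint union of $G$ and $H$ by identifying each vertex of $B\cap C$ in $G$ with the identically named vertex in $H$ (an edge present in both is kept once). For an isomorphism-invariant optimization problem $\Pi$ on graphs with optimum value $\mathrm{OPT}_\Pi(G)$, two $B$-boundaried graphs $G_B,G'_B$ are gluing equivalent w.r.t. $\Pi$ and $B$, written $G_B\equiv_{\Pi,B}G'_B$, if there is $\Delta\in\mathbb{Z}$ with $\mathrm{OPT}_\Pi(G_B\oplus H_B)=\mathrm{OPT}_\Pi(G'_B\oplus H_B)+\Delta$ for every boundaried graph $H_B$. For a pure graph minimization problem $\rho$, a $\rho$-solution of $G$ is a feasible solution $s$ with value $\rho(G,s)$. For computable $f$, a boundaried kernelization of size $f$ for $\Pi[\rho]$ is a polynomial-time algorithm that, given a boundaried graph $G_B$ and a $\rho$-solution $s$ of $G$, outputs a boundaried graph $G'_B$ with $G_B\equiv_{\Pi,B}G'_B$, a $\rho$-solution $s'$ of $G'$ with $|G'|,|s'|,\rho(G',s')\le f(|B|+\rho(G,s))$ (encoding sizes), and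 an integer $\Delta$ with $\mathrm{OPT}_\Pi(G_B\oplus H_B)=\mathrm{OPT}_\Pi(G'_B\oplus H_B)+\Delta$ for all $H_B$. \textsc{Maximum Cut} is the maximization problem whose feasible solutions on $G$ are partitions $V(G)=X\,\dot\cup\,Y$, with value the number of edges with one endpoint in $X$ and one in $Y$. \textsc{Vertex Cover} (vc) is the minimization problem with feasible solutions $S\subseteq V(G)$ such that $G-S$ is edgeless, value $|S|$; \textsc{Maximum Cut}[vc] means $\rho=$ \textsc{Vertex Cover}. *)

(* Defs.v *)
From HB Require Import structures.
From mathcomp Require Import all_boot all_order all_algebra.
From mathcomp Require Import finmap.
Set Implicit Arguments. Unset Strict Implicit. Unset Printing Implicit Defensive.
Local Open Scope fset_scope.

Record graph := Graph { gV : {fset nat}; gadj : rel nat }.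

Definition wf_graph (G : graph) : Prop :=
  [/\ forall u v, gadj G u v = gadj G v u,
      forall u, ~~ gadj G u u &
      forall u v, gadj G u v -> (u \in gV G) && (v \in gV G)].

Definition bgraph (B : {fset nat}) (G : graph) : Prop :=
  wf_graph G /\ B `<=` gV G.

(* gluing G_B (+) H_C: union of vertex sets (identical names identified),
   union of edge sets (common edges kept once). *)
Definition glue (G H : graph) : graph :=
  Graph (gV G `|` gV H) (fun u v => gadj G u v || gadj H u v).

Definition glue_ok (B C : {fset nat}) (G H : graph) : Prop :=
  gV G `&` gV H `<=` B `&` C.

Definition cut_value (G : graph) (X : {fset nat}) : nat :=
  \sum_(u <- X) \sum_(v <- gV G `\` X) gadj G u v.

Definition maxcut (G : graph) : nat :=
  \max_(X <- fpowerset (gV G)) cut_value G X.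

Definition glue_equiv (B : {fset nat}) (G G' : graph) : Prop :=
  exists Delta : int, forall H : graph,
    bgraph B H -> glue_ok B B G H -> glue_ok B B G' H ->
    (Posz (maxcut (glue G H)) = Posz (maxcut (glue G' H)) + Delta)%R.

Definition is_vc (G : graph) (S : {fset nat}) : Prop :=
  S `<=` gV G /\ forall u v, gadj G u v -> (u \in S) || (v \in S).

Definition edgeless_outside (B : {fset nat}) (G : graph) : Prop :=
  forall u v, gadj G u v -> (u \in B) || (v \in B).

(* A boundaried kernelization of size f for MaxCut[vc], as a plain function
   (the polynomial-time requirement is dropped); the size of the
   output graph is measured by its number of vertices. *)
Definition bd_kernel (f : nat -> nat)
    (K : {fset nat} -> graph -> {fset nat} -> graph * {fset nat} * int) : Prop :=
  forall (B : {fset nat}) (G : graph) (s : {fset nat}),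
    bgraph B G -> is_vc G s ->
    let: (G', s', Delta) := K B G s in
    [/\ bgraph B G', is_vc G' s',
        #|` gV G'| <= f (#|` B| + #|` s|)%N,
        #|` s'| <= f (#|` B| + #|` s|)%N &
        forall H : graph, bgraph B H -> glue_ok B B G H -> glue_ok B B G' H ->
          (Posz (maxcut (glue G H)) = Posz (maxcut (glue G' H)) + Delta)%R].

(* Main.v *)
Require Import Defs.
From mathcomp Require Import all_boot all_order all_algebra.
From mathcomp Require Import finmap zify.
Local Open Scope fset_scope.

Lemma sum_eq_mem (b : nat) (W : seq nat) : uniq W -> \sum_(v <- W) ((b == v) : nat) = (b \in W).
Proof.
elim: W => [|a W IH] /=; first by rewrite big_nil.
case/andP => aW uW; rewrite big_cons IH // inE.
case: eqP => [->|//]; by rewrite (negbTE aW).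
Qed.

Lemma sum_count_mem (a : nat * nat) (E : seq (nat * nat)) :
  \sum_(e <- E) ((e == a) : nat) = count_mem a E.
Proof. elim: E => [|e E IH] /=; by rewrite ?big_nil // big_cons IH. Qed.

Lemma sum2_eq a b (X W : seq nat) : uniq X -> uniq W ->
  \sum_(u <- X) \sum_(v <- W) (((a, b) == (u, v)) : nat) = (a \in X) * (b \in W).
Proof.
move=> uX uW.
have -> : \sum_(u <- X) \sum_(v <- W) (((a, b) == (u, v)) : nat)
   = \sum_(u <- X) ((a == u) * \sum_(v <- W) ((b == v) : nat)).
  apply: eq_bigr => u _; rewrite big_distrr; apply: eq_bigr => v _.
  by rewrite xpair_eqE; case: (a == u); case: (b == v).
by rewrite sum_eq_mem // -big_distrl sum_eq_mem.
Qed.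

Lemma cut_ub G X E : (forall u v, gadj G u v -> ((u,v) \in E) || ((v,u) \in E)) ->
  cut_value G X <= \sum_(e <- E) ((e.1 \in X) != (e.2 \in X)).
Proof.
move=> HE; rewrite /cut_value; set W := gV G `\` X.
apply: (@leq_trans (\sum_(u <- X) \sum_(v <- W) \sum_(e <- E) (((e == (u,v)) : nat) + (e == (v,u))))).
  apply: leq_sum => u _; apply: leq_sum => v _.
  case Ha: (gadj G u v) => //.
  rewrite big_split /= !sum_count_mem.
  move: (HE u v Ha) => /orP [] H.
    have h: 0 < count_mem (u, v) E by rewrite -has_count has_pred1.
    exact: leq_trans h (leq_addr _ _).
  have h: 0 < count_mem (v, u) E by rewrite -has_count has_pred1.
  exact: leq_trans h (leq_addl _ _).
rewrite (eq_bigr (fun u => \sum_(e <- E) \sum_(v <- W) (((e == (u,v)) : nat) + (e == (v,u)))));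
  last by move=> u _; rewrite exchange_big.
rewrite exchange_big /=; apply: leq_sum => [[a b]] _ /=.
rewrite (eq_bigr (fun u => (\sum_(v <- W) (((a, b) == (u, v)) : nat) + \sum_(v <- W) (((b, a) == (u, v)) : nat))%N)); last first.
  move=> u _; rewrite big_split /=; congr (_ + _)%N; apply: eq_bigr => v _.
  by rewrite !xpair_eqE andbC.
rewrite big_split /= !sum2_eq ?fset_uniq //.
rewrite /W !in_fsetD.
by case: (a \in X); case: (b \in X); case: (a \in gV G); case: (b \in gV G).
Qed.

Lemma sub_sum (l s : seq nat) (F : nat -> nat) : uniq l -> uniq s -> {subset l <= s} ->
  \sum_(u <- l) F u <= \sum_(u <- s) F u.
Proof.
move=> ul us ls.
rewrite [X in _ <= X](bigID (fun u => u \in l)) /=; apply: (leq_trans _ (leq_addr _ _)).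
have pl : perm_eq l [seq u <- s | u \in l].
  apply: uniq_perm => //; first exact: filter_uniq.
  by move=> u; rewrite mem_filter; case ul': (u \in l) => //=; rewrite ls.
by rewrite (perm_big _ pl) big_filter.
Qed.

Lemma cut_lb G X (l : seq nat) (w : nat -> seq nat) : uniq l -> {subset l <= X} ->
  (forall u, u \in l -> uniq (w u) /\ forall v, v \in w u -> (v \in gV G `\` X) && gadj G u v) ->
  \sum_(u <- l) size (w u) <= cut_value G X.
Proof.
move=> ul lX Hw; rewrite /cut_value.
apply: (@leq_trans (\sum_(u <- l) \sum_(v <- gV G `\` X) gadj G u v)); last first.
  by apply: sub_sum => //; apply: fset_uniq.
rewrite big_seq_cond [X in _ <= X]big_seq_cond; apply: leq_sum => u /andP [ul' _].
case: (Hw u ul') => uw Hv.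
rewrite -sum1_size; apply: (@leq_trans (\sum_(v <- w u) gadj G u v)).
  rewrite big_seq_cond [X in _ <= X]big_seq_cond; apply: leq_sum => v /andP [vw _].
  by case/andP: (Hv v vw) => _ ->.
apply: sub_sum => //; first exact: fset_uniq.
by move=> v /Hv /andP [].
Qed.

Lemma maxcut_ge G X : X `<=` gV G -> cut_value G X <= maxcut G.
Proof. by move=> HX; rewrite /maxcut; apply: (leq_bigmax_seq X) => //; rewrite fpowersetE. Qed.

Lemma maxcut_le G n : (forall X, X `<=` gV G -> cut_value G X <= n) -> maxcut G <= n.
Proof. by move=> H; apply/bigmax_leqP_seq => X; rewrite fpowersetE => /H. Qed.

Lemma sum_const_seq (r : seq nat) (c : nat) : \sum_(u <- r) c = size r * c.
Proof. elim: r => [|a r IH]; by rewrite ?big_nil // big_cons IH mulSn. Qed.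

Lemma cardf_size (A : {fset nat}) : #|` A| = size A.
Proof. by rewrite card_fset_sum1 sum1_size. Qed.

Lemma cut_le_card G X : X `<=` gV G -> cut_value G X <= #|` gV G| * #|` gV G|.
Proof.
move=> HX; rewrite /cut_value.
apply: (@leq_trans (\sum_(u <- X) \sum_(v <- gV G `\` X) 1)).
  by apply: leq_sum => u _; apply: leq_sum => v _; case: (gadj G u v).
rewrite (eq_bigr (fun u => size (gV G `\` X))); last by move=> u _; rewrite sum1_size.
rewrite sum_const_seq -!cardf_size; apply: leq_mul; apply: fsubset_leq_card => //.
exact: fsubsetDl.
Qed.
Local Close Scope fset_scope.


Section Conc.
Variables x y : nat.
Hypothesis xy : x != y.
Let n0 := (x + y).+1.

Definition gE i u v := ((u == x) || (u == y)) && (n0 <= v < n0 + i).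
Definition Gm i := Graph (seq_fset tt (x :: y :: iota n0 i)) (fun u v => gE i u v || gE i v u).
Definition hE m k u v := ((u == x) && (m <= v < m + k)) || ((m <= u < m + k) && (v == u + k))
   || ((m + k <= u < m + k + k) && (v == y)).
Definition Hm m k := Graph (seq_fset tt (x :: y :: iota m (k + k))) (fun u v => hE m k u v || hE m k v u).

Lemma gV_Gm i : gV (Gm i) = seq_fset tt (x :: y :: iota n0 i). Proof. by []. Qed.
Lemma gadj_Gm i u v : gadj (Gm i) u v = gE i u v || gE i v u. Proof. by []. Qed.
Lemma gV_Hm m k : gV (Hm m k) = seq_fset tt (x :: y :: iota m (k + k)). Proof. by []. Qed.
Lemma gadj_Hm m k u v : gadj (Hm m k) u v = hE m k u v || hE m k v u. Proof. by []. Qed.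

Lemma bg_Gm i : bgraph [fset x; y]%fset (Gm i) /\ edgeless_outside [fset x; y]%fset (Gm i).
Proof.
split; last by move=> u v; rewrite gadj_Gm => /orP [] /andP [/orP [] /eqP -> _]; rewrite !inE eqxx ?orbT.
split; last by apply/fsubsetP => v; rewrite ?gV_Gm ?gV_Hm !inE seq_fsetE !inE => /orP [] ->; rewrite ?orbT.
split => [u v|u|u v]; rewrite ?gadj_Gm ?gV_Gm; first by rewrite orbC.
  rewrite orbb /gE; apply/negP => /andP [/orP [] /eqP -> ]; rewrite /n0; lia.
rewrite !seq_fsetE !inE !mem_iota /gE => /orP [] /andP [/orP [] /eqP -> h];
  rewrite ?eqxx ?orbT /=; rewrite /n0 in h *; lia.
Qed.

Lemma bg_Hm m k : n0 <= m -> bgraph [fset x; y]%fset (Hm m k).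
Proof.
move=> hm; rewrite /n0 in hm.
split; last by apply/fsubsetP => v; rewrite ?gV_Gm ?gV_Hm !inE seq_fsetE !inE => /orP [] ->; rewrite ?orbT.
split => [u v|u|u v]; rewrite ?gadj_Hm ?gV_Hm; first by rewrite orbC.
  rewrite orbb /hE; apply/negP; lia.
rewrite !seq_fsetE !inE !mem_iota /hE; lia.
Qed.

Lemma gV_glue G H : gV (glue G H) = (gV G `|` gV H)%fset. Proof. by []. Qed.
Lemma gadj_glue G H u v : gadj (glue G H) u v = gadj G u v || gadj H u v. Proof. by []. Qed.

Lemma gok_GH i m k : n0 + i <= m -> glue_ok [fset x; y]%fset [fset x; y]%fset (Gm i) (Hm m k).
Proof.
move=> hm; rewrite /glue_ok; apply/fsubsetP => v; rewrite !in_fsetI gV_Gm gV_Hm !seq_fsetE !inE !mem_iota.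
rewrite /n0 in hm; lia.
Qed.

Lemma gok_any G m k : (forall v, v \in gV G -> v < m) -> n0 <= m ->
  glue_ok [fset x; y]%fset [fset x; y]%fset G (Hm m k).
Proof.
move=> hG hm; rewrite /glue_ok; apply/fsubsetP => v; rewrite !in_fsetI gV_Hm !seq_fsetE !inE !mem_iota.
case/andP => /hG; rewrite /n0 in hm; lia.
Qed.

Lemma lb_gen G m k ex : n0 <= m -> x \in gV G -> (forall v, v \in gV G -> v < m) -> uniq ex ->
  (forall v, v \in ex -> [&& v \in gV G, v != x, v < m & gadj G x v]) ->
  size ex + 3 * k <= maxcut (glue G (Hm m k)).
Proof.
move=> hm xG hG uex hex; rewrite /n0 in hm.
set X := seq_fset tt (x :: iota (m + k) k).
have HX : (X `<=` gV (glue G (Hm m k)))%fset.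
  apply/fsubsetP => v; rewrite seq_fsetE gV_glue in_fsetU gV_Hm seq_fsetE !inE !mem_iota.
  case/orP => [/eqP -> | h]; first by rewrite xG.
  apply/orP; right; lia.
apply: (leq_trans _ (maxcut_ge _ _ HX)).
have := @cut_lb (glue G (Hm m k)) X (x :: iota (m + k) k)
   (fun u => if u == x then ex ++ iota m k else [:: u - k; y]).
rewrite big_cons eqxx size_cat size_iota big_seq.
rewrite (eq_bigr (fun _ => 2)); last first.
  by move=> u; rewrite mem_iota => h; have -> : (u == x) = false by lia.
rewrite -big_seq sum_const_seq size_iota.
have -> : (size ex + k + k * 2 = size ex + 3 * k)%N by lia.
apply.
- rewrite /= iota_uniq andbT mem_iota; lia.
- by move=> u hu; rewrite seq_fsetE.
move=> u; rewrite inE => /orP [/eqP -> | hu].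
  rewrite eqxx; split.
    rewrite cat_uniq uex iota_uniq andbT /=; apply/hasPn => v; rewrite mem_iota => hv.
    apply/negP => /hex; lia.
  move=> v; rewrite mem_cat => /orP [hv | hv].
    move: (hex v hv) => /and4P [vG vx vm ax].
    rewrite in_fsetD seq_fsetE gV_glue in_fsetU vG gadj_glue ax inE mem_iota andbT /=; lia.
  rewrite in_fsetD seq_fsetE gV_glue in_fsetU gadj_glue gV_Hm gadj_Hm seq_fsetE !inE !mem_iota /hE.
  move: hv; rewrite mem_iota; lia.
have ux : (u == x) = false by move: hu; rewrite mem_iota; lia.
rewrite ux; split.
  rewrite /= inE andbT; move: hu; rewrite mem_iota; lia.
move=> v; rewrite !inE => /orP [] /eqP ->;
  rewrite ?in_fsetD ?seq_fsetE ?gV_glue ?in_fsetU ?gadj_glue ?gV_Hm ?gadj_Hm ?seq_fsetE !inE !mem_iota /hE;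
  move: hu; rewrite mem_iota; lia.
Qed.

Definition blk m i t := [:: (x, n0 + t); (y, n0 + t); (x, m + t); (m + t, m + t + i); (m + t + i, y)].

Lemma ub1 i m : n0 + i <= m -> maxcut (glue (Gm i) (Hm m i)) <= 4 * i.
Proof.
move=> hm; rewrite /n0 in hm; apply: maxcut_le => X _.
set E := flatten [seq blk m i t | t <- iota 0 i].
apply: (leq_trans (cut_ub _ X E _)).
  suff H : forall u v, gE i u v || hE m i u v -> (u, v) \in E.
    move=> u v; rewrite gadj_glue gadj_Gm gadj_Hm => /orP [] /orP [] h.
    - by rewrite (H u v) ?h.
    - by rewrite (H v u) ?h ?orbT.
    - by rewrite (H u v) ?h ?orbT.
    - by rewrite (H v u) ?h ?orbT.
  move=> u v /orP [] h.
    apply/flatten_mapP; exists (v - n0); first by rewrite mem_iota; move: h; rewrite /gE /n0; lia.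
    rewrite /blk !inE !xpair_eqE; move: h; rewrite /gE /n0; lia.
  move: h; rewrite /hE => /orP [/orP [] h | h].
  - apply/flatten_mapP; exists (v - m); first by rewrite mem_iota; lia.
    rewrite /blk !inE !xpair_eqE; lia.
  - apply/flatten_mapP; exists (u - m); first by rewrite mem_iota; lia.
    rewrite /blk !inE !xpair_eqE; lia.
  - apply/flatten_mapP; exists (u - m - i); first by rewrite mem_iota; lia.
    rewrite /blk !inE !xpair_eqE; lia.
rewrite big_flatten big_map /=.
apply: (@leq_trans (\sum_(t <- iota 0 i) 4)); last by rewrite sum_const_seq size_iota mulnC.
apply: leq_sum => t _; rewrite /blk !big_cons big_nil /=.
by case: (x \in X); case: (y \in X); case: (n0 + t \in X); case: (m + t \in X); case: (m + t + i \in X).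
Qed.

Lemma ub0 i m : n0 + i <= m -> maxcut (glue (Gm i) (Hm m 0)) <= 2 * i.
Proof.
move=> hm; rewrite /n0 in hm; apply: maxcut_le => X _.
set E := flatten [seq [:: (x, n0 + t); (y, n0 + t)] | t <- iota 0 i].
apply: (leq_trans (cut_ub _ X E _)).
  suff H : forall u v, gE i u v -> (u, v) \in E.
    move=> u v; rewrite gadj_glue gadj_Gm gadj_Hm => /orP [] /orP [] h.
    - by rewrite (H u v) ?h.
    - by rewrite (H v u) ?h ?orbT.
    - by move: h; rewrite /hE; lia.
    - by move: h; rewrite /hE; lia.
  move=> u v h.
  apply/flatten_mapP; exists (v - n0); first by rewrite mem_iota; move: h; rewrite /gE /n0; lia.
  rewrite !inE !xpair_eqE; move: h; rewrite /gE /n0; lia.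
rewrite big_flatten big_map /=.
apply: (@leq_trans (\sum_(t <- iota 0 i) 2)); last by rewrite sum_const_seq size_iota mulnC.
apply: leq_sum => t _; rewrite !big_cons big_nil /=.
by case: (x \in X); case: (y \in X); case: (n0 + t \in X).
Qed.

Lemma lb0 i m : n0 <= m -> 2 * i <= maxcut (glue (Gm i) (Hm m 0)).
Proof.
move=> hm; rewrite /n0 in hm.
set X := seq_fset tt [:: x; y].
have HX : (X `<=` gV (glue (Gm i) (Hm m 0)))%fset.
  apply/fsubsetP => v; rewrite seq_fsetE gV_glue in_fsetU gV_Gm seq_fsetE !inE.
  by case/orP => ->; rewrite ?orbT.
apply: (leq_trans _ (maxcut_ge _ _ HX)).
have := @cut_lb (glue (Gm i) (Hm m 0)) X [:: x; y] (fun _ => iota n0 i).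
rewrite !big_cons big_nil size_iota addn0 mul2n -addnn; apply.
- by rewrite /= inE andbT.
- by move=> u hu; rewrite seq_fsetE.
move=> u hu; split; first exact: iota_uniq.
move=> v hv; move: hu hv.
rewrite ?in_fsetD ?seq_fsetE ?gV_glue ?in_fsetU ?gadj_glue ?gV_Gm ?gadj_Gm ?seq_fsetE !inE !mem_iota /gE /n0.
lia.
Qed.

Lemma lb_Gm i m k : n0 + i <= m -> i + 3 * k <= maxcut (glue (Gm i) (Hm m k)).
Proof.
move=> hm.
have := @lb_gen (Gm i) m k (iota n0 i).
rewrite size_iota; apply.
- rewrite /n0 in hm *; lia.
- by rewrite gV_Gm seq_fsetE inE eqxx.
- by move=> v; rewrite gV_Gm seq_fsetE !inE mem_iota; rewrite /n0 in hm *; lia.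
- exact: iota_uniq.
move=> v; rewrite mem_iota gV_Gm gadj_Gm seq_fsetE !inE mem_iota /gE; rewrite /n0 in hm *; lia.
Qed.

End Conc.
Local Open Scope fset_scope.

Theorem mainTheorem11 (x y : nat) : x <> y ->
  (exists Gs : nat -> graph,
     (forall i, bgraph [fset x; y] (Gs i) /\ edgeless_outside [fset x; y] (Gs i)) /\
     (forall i j, i <> j -> ~ glue_equiv [fset x; y] (Gs i) (Gs j)))
  /\
  (forall (f : nat -> nat)
     (K : {fset nat} -> graph -> {fset nat} -> graph * {fset nat} * int),
     ~ bd_kernel f K).
Proof.
move=> xy'; have xy : x != y by apply/eqP.
split.
  exists (Gm x y); split; first by move=> i; exact: bg_Gm.
  move=> i j ij [D HD].
  pose m := ((x + y).+1 + i + j)%N.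
  have hmi : ((x + y).+1 + i <= m)%N by rewrite /m; lia.
  have hmj : ((x + y).+1 + j <= m)%N by rewrite /m; lia.
  have hm : ((x + y).+1 <= m)%N by rewrite /m; lia.
  have e0 := HD (Hm x y m 0) (bg_Hm _ _ xy _ 0 hm) (gok_GH _ _ xy _ _ 0 hmi) (gok_GH _ _ xy _ _ 0 hmj).
  have a1 := ub0 _ _ xy _ _ hmi; have a2 := lb0 _ _ xy j _ hm.
  have a3 := ub0 _ _ xy _ _ hmj; have a4 := lb0 _ _ xy i _ hm.
  have [lt|gt] : (i < j)%N \/ (j < i)%N by lia.
    have e1 := HD (Hm x y m j) (bg_Hm _ _ xy _ j hm) (gok_GH _ _ xy _ _ j hmi) (gok_GH _ _ xy _ _ j hmj).
    have b1 := ub1 _ _ xy _ _ hmj.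
    have b2 := lb_Gm _ _ xy _ _ j hmi.
    lia.
  have e1 := HD (Hm x y m i) (bg_Hm _ _ xy _ i hm) (gok_GH _ _ xy _ _ i hmi) (gok_GH _ _ xy _ _ i hmj).
  have b1 := ub1 _ _ xy _ _ hmi.
  have b2 := lb_Gm _ _ xy _ _ i hmj.
  lia.
move=> f K Hker.
pose B := [fset x; y].
pose N := f (#|` B| + #|` B|)%N.
pose i := (N * N).+1.
have hi : i = (N * N).+1 by [].
have [hbG hedge] := bg_Gm _ _ xy i.
have hvc : is_vc (Gm x y i) B := conj hbG.2 hedge.
move: (Hker B (Gm x y i) B hbG hvc).
case: (K B (Gm x y i) B) => [[G' s'] D] [hbG' _ hcard _ heq].
pose m := (\max_(v <- gV G') v + (x + y).+1 + i).+1.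
have hG'm : forall v, v \in gV G' -> (v < m)%N.
  move=> v hv; have h : (v <= \max_(w <- gV G') w)%N := leq_bigmax_seq (F := fun w => w) v hv isT.
  rewrite /m; lia.
have hmi : ((x + y).+1 + i <= m)%N by rewrite /m; lia.
have hm : ((x + y).+1 <= m)%N by rewrite /m; lia.
have xG' : x \in gV G' by apply: (fsubsetP hbG'.2); rewrite !inE eqxx.
have yG' : y \in gV G' by apply: (fsubsetP hbG'.2); rewrite !inE eqxx orbT.
have e0 := heq (Hm x y m 0) (bg_Hm _ _ xy _ 0 hm) (gok_GH _ _ xy _ _ 0 hmi) (gok_any _ _ xy G' m 0 hG'm hm).
have e1 := heq (Hm x y m i) (bg_Hm _ _ xy _ i hm) (gok_GH _ _ xy _ _ i hmi) (gok_any _ _ xy G' m i hG'm hm).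
have a1 := lb0 _ _ xy i _ hm.
have a3 := ub1 _ _ xy _ _ hmi.
have a4 : (0 + 3 * i <= maxcut (glue G' (Hm x y m i)))%N.
  apply: (lb_gen _ _ xy G' m i [::] hm xG' hG'm) => //.
have a2 : (maxcut (glue G' (Hm x y m 0)) <= N * N)%N.
  apply: maxcut_le => X hX; apply: (leq_trans (cut_le_card _ _ hX)).
  have hc : (#|` gV (glue G' (Hm x y m 0))| <= N)%N.
    apply: leq_trans hcard; apply: fsubset_leq_card; apply/fsubsetP => v.
    rewrite gV_glue in_fsetU gV_Hm seq_fsetE !inE => /orP [//|/orP [] /eqP ->] //.
  exact: leq_mul.
lia.
Qed.
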